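(* Let $q=2$. Under $G_2$ there are exactly $6$ line orbits, namely: $\mathcal L_1=\{\text{RC-lines}\}$ (size $3$); $\mathcal L_2=\{\text{IA-lines}\}$ (size $1$); $\mathcal L_3=\{\text{U}\Gamma_2\text{-lines}\}$ (size $3$); $\mathcal L_4=\{\text{RA-lines}\}\cup\{\text{IC-lines}\}$ (size $3+1=4$); $\mathcal L_5=\{\text{Tr-lines}\}\cup\{\text{U}\Gamma_1\text{-lines}\}\cup\{\text{Un}\Gamma\text{-lines}\}$ (size $3+3+6=12$); $\mathcal L_6=\{\text{E}\Gamma\text{-lines}\}\cup\{\text{En}\Gamma\text{-lines}\}$ (size $6+6=12$).
   Context: Notation. $\mathbb F_q$ is the field with $q$ elements, $\mathbb F_q^+=\mathbb F_q\cup\{\infty\}$. Points of $\mathrm{PG}(3,q)$ are written $\mathbf P(x_0,x_1,x_2,x_3)$ with $x$ a nonzero row vector up to scalars; $\boldsymbol\pi(c_0,c_1,c_2,c_3)$ is the plane $c_0x_0+c_1x_1+c_2x_2+c_3x_3=0$. Put $P(t)=\mathbf P(t^3,t^2,t,1)$ for $t\in\mathbb F_q$, $P(\infty)=\mathbf P(1,0,0,0)$, and $\mathscr C=\{P(t):t\in\mathbb F_q^+\}$ (the twisted cubic). The osculating planes are $\pi_{\rm osc}(t)=\boldsymbol\pi(1,-3t,3t^2,-t^3)$ ($t\in\mathbb F_q$) and $\pi_{\rm osc}(\infty)=\boldsymbol\pi(0,0,0,1)$; these $q+1$ planes are called $\Gamma$-planes. The tangent at $P(t)$, $t\in\mathbb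 F_q$, is the line through $P(t)$ and $\mathbf P(3t^2,2t,1,0)$; the tangent at $P(\infty)$ is the line through $\mathbf P(1,0,0,0)$ and $\mathbf P(0,1,0,0)$. A real chord is a line through two distinct points of $\mathscr C$; a real axis is the intersection of two distinct $\Gamma$-planes. For $\alpha\in\mathbb F_{q^2}\setminus\mathbb F_q$, the line of $\mathrm{PG}(3,q^2)$ through $P(\alpha),P(\alpha^q)$ (resp. the intersection of the planes $\pi_{\rm osc}(\alpha),\pi_{\rm osc}(\alpha^q)$, given by the same formulas over $\mathbb F_{q^2}$) is defined over $\mathbb F_q$, and the corresponding line of $\mathrm{PG}(3,q)$ is an imaginary chord (resp. imaginary axis). A unisecant is a line meeting $\mathscr C$ in exactly one point; an external line is a line disjoint from $\mathscr C$. $G_q$ is the group of all projectivities of $\mathrm{PG}(3,q)$ mapping $\mathscr C$ onto itself. Line types (for $q\not\equiv0\pmod 3$): RC = real chord; Tr = tangent; IC = imaginary chord; RA = real axis; IA = imaginary axis; U$\Gamma$ = unisecant which is not a tangent and is contained in some $\Gamma$-plane; Un$\Gamma$ = unisecant contained in no $\Gamma$-plane; E$\Gamma$ = external line contained in exactly one $\Gamma$-plane; En$\Gamma$ = external line contained in no $\Gamma$-plane that is neither an imaginary chord nor an imaginary axis. For $q=2$: $\mathscr C$ lies in the plane $x_1=x_2$; U$\Gamma_2$-lines are the U$\Gamma$-lines contained in the plane $x_1=x_2$, and U$\Gamma_1$-lines are the remaining U$\Gamma$-lines. *)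

(* Defs.v *)
(* Projective space PG(3,F) over a finite field F:
   a subspace of F^4 (row vectors) is represented by its canonical
   matrix <<A>>%MS : 'M[F]_4 ; points = rank 1, lines = rank 2. *)
From HB Require Import structures.
From mathcomp Require Import all_boot all_order all_algebra finfield.
Set Implicit Arguments. Unset Strict Implicit. Unset Printing Implicit Defensive.
Import Order.TTheory GRing.Theory Num.Theory.
Local Open Scope ring_scope.

Definition vec4 (R : nzRingType) (a b c d : R) : 'rV[R]_4 :=
  \row_(i < 4) [:: a; b; c; d]`_i.

(* P(t) = P(t^3,t^2,t,1), P(oo) = P(1,0,0,0); None encodes oo *)
Definition Pc (R : nzRingType) (t : option R) : 'rV[R]_4 :=
  match t with Some t => vec4 (t ^+ 3) (t ^+ 2) t 1 | None => vec4 1 0 0 0 end.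

(* coefficient vector of the osculating plane pi_osc(t) *)
Definition osc (R : nzRingType) (t : option R) : 'rV[R]_4 :=
  match t with
  | Some t => vec4 1 (- (3%:R * t)) (3%:R * t ^+ 2) (- t ^+ 3)
  | None => vec4 0 0 0 1 end.

(* second point spanning the tangent at P(t) *)
Definition Tdir (R : nzRingType) (t : option R) : 'rV[R]_4 :=
  match t with
  | Some t => vec4 (3%:R * t ^+ 2) (2%:R * t) 1 0
  | None => vec4 0 1 0 0 end.

Section PG3.
Variable F : finFieldType.

Definition lines : {set 'M[F]_4} :=
  [set L : 'M[F]_4 | (<<L>>%MS == L) && (\rank L == 2)%N].

Definition cubic : {set 'M[F]_4} := [set <<Pc t>>%MS | t : option F].

Definition in_plane (L : 'M[F]_4) (c : 'rV[F]_4) : bool := L *m c^T == 0.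

Definition ncub (L : 'M[F]_4) : nat := #|[set P in cubic | (P <= L)%MS]|.

Definition nGamma (L : 'M[F]_4) : nat :=
  #|[set <<osc t>>%MS | t : option F & in_plane L (osc t)]|.

Definition is_RC (L : 'M[F]_4) : bool :=
  (L \in lines) && [exists t : option F, exists s : option F,
     (<<Pc t>>%MS != <<Pc s>>%MS) && (L == col_mx (Pc t) (Pc s))%MS].

Definition is_Tr (L : 'M[F]_4) : bool :=
  (L \in lines) && [exists t : option F, (L == col_mx (Pc t) (Tdir t))%MS].

Definition is_RA (L : 'M[F]_4) : bool :=
  (L \in lines) && [exists t : option F, exists s : option F,
     (<<osc t>>%MS != <<osc s>>%MS) &&
     (L == kermx (row_mx (osc t)^T (osc s)^T))%MS].

(* imaginary chords / axes, with respect to a quadratic extension K of F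
   given by the embedding f : F -> K; q = #|F|, alpha^q the conjugate *)
Definition is_IC (K : finFieldType) (f : {rmorphism F -> K}) (L : 'M[F]_4) :=
  (L \in lines) && [exists a : K, (a \notin codom f) &&
     (map_mx f L == col_mx (Pc (Some a)) (Pc (Some (a ^+ #|F|))))%MS].

Definition is_IA (K : finFieldType) (f : {rmorphism F -> K}) (L : 'M[F]_4) :=
  (L \in lines) && [exists a : K, (a \notin codom f) &&
     (map_mx f L == kermx (row_mx (osc (Some a))^T
                                  (osc (Some (a ^+ #|F|)))^T))%MS].

Definition is_UG (L : 'M[F]_4) : bool :=
  [&& L \in lines, ncub L == 1%N, ~~ is_Tr L & nGamma L != 0%N].

Definition is_UnG (L : 'M[F]_4) : bool :=
  [&& L \in lines, ncub L == 1%N & nGamma L == 0%N].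

Definition is_EG (L : 'M[F]_4) : bool :=
  [&& L \in lines, ncub L == 0%N & nGamma L == 1%N].

Definition is_EnG (K : finFieldType) (f : {rmorphism F -> K}) (L : 'M[F]_4) :=
  [&& L \in lines, ncub L == 0%N, nGamma L == 0%N, ~~ is_IC f L & ~~ is_IA f L].

(* for q = 2 : the plane x1 = x2 containing the cubic *)
Definition is_UG2 (L : 'M[F]_4) : bool := is_UG L && in_plane L (vec4 0 1 (-1) 0).
Definition is_UG1 (L : 'M[F]_4) : bool := is_UG L && ~~ in_plane L (vec4 0 1 (-1) 0).

Definition Gq : {set 'M[F]_4} :=
  [set A : 'M[F]_4 | (A \in unitmx) && ([set <<X *m A>>%MS | X in cubic] == cubic)].

Definition line_orbit (L : 'M[F]_4) : {set 'M[F]_4} := [set <<L *m A>>%MS | A in Gq].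

Definition line_orbits : {set {set 'M[F]_4}} := [set line_orbit L | L in lines].

End PG3.

(* Main.v *)
Require Import Defs.
From HB Require Import structures.
From mathcomp Require Import all_boot all_order all_algebra finfield ring.
Set Implicit Arguments. Unset Strict Implicit. Unset Printing Implicit Defensive.
Import GRing.Theory.
Local Open Scope ring_scope.

Record cf := CF { cE : eqType; call : seq cE; cadd : cE -> cE -> cE;
  cmul : cE -> cE -> cE; c0 : cE; c1 : cE }.

Section Comp.
Variable C : cf.
Definition V := (cE C * cE C * cE C * cE C)%type.
Definition vz : V := (c0 C, c0 C, c0 C, c0 C).
Definition vadd (u v : V) : V :=
  let '(a,b,c,d) := u in let '(a',b',c',d') := v in
  (cadd a a', cadd b b', cadd c c', cadd d d').
Definition vsc (k : cE C) (u : V) : V :=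
  let '(a,b,c,d) := u in (cmul k a, cmul k b, cmul k c, cmul k d).
Definition vdot (u v : V) : cE C :=
  let '(a,b,c,d) := u in let '(a',b',c',d') := v in
  cadd (cadd (cmul a a') (cmul b b')) (cadd (cmul c c') (cmul d d')).
Definition allV : seq V :=
  [seq (x, d) | x <- [seq (y, c) | y <- [seq (a, b) | a <- call C, b <- call C],
                    c <- call C], d <- call C].
Definition sp1 (u : V) : seq V := [seq vsc k u | k <- call C].
Definition sp2 (u v : V) : seq V :=
  [seq vadd (vsc k u) (vsc l v) | k <- call C, l <- call C].
Definition eqsp (f g : V -> bool) := all (fun z => f z == g z) allV.
Definition subsp (f g : V -> bool) := all (fun z => f z ==> g z) allV.
Definition lt_eq (p q : V * V) :=
  eqsp (fun z => z \in sp2 p.1 p.2) (fun z => z \in sp2 q.1 q.2).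
Definition lt_eq2 (p q : V * V) :=
  [&& p.1 \in sp2 q.1 q.2, p.2 \in sp2 q.1 q.2, q.1 \in sp2 p.1 p.2 & q.2 \in sp2 p.1 p.2].
Definition eq1 (u v : V) := eqsp (fun z => z \in sp1 u) (fun z => z \in sp1 v).
Definition nd (p : V * V) := (p.1 != vz) && (p.2 \notin sp1 p.1).
Definition kerp (cs : seq V) (z : V) := all (fun c => vdot z c == c0 C) cs.
Definition vmul (z : V) (r : V * V * V * V) : V :=
  let '(a,b,c,d) := z in let '(r0,r1,r2,r3) := r in
  vadd (vadd (vsc a r0) (vsc b r1)) (vadd (vsc c r2) (vsc d r3)).
End Comp.

Lemma vec4E (R : nzRingType) (a b c d : R) (i : 'I_4) :
  vec4 a b c d 0 i = [:: a; b; c; d]`_i.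
Proof. by rewrite mxE. Qed.

Record good (F : fieldType) (C : cf) (enc : cE C -> F) : Prop := Good {
  g_add : forall a b, enc (cadd a b) = enc a + enc b;
  g_mul : forall a b, enc (cmul a b) = enc a * enc b;
  g_0 : enc (c0 C) = 0;
  g_inj : injective enc;
  g_surj : forall x, exists2 e, e \in call C & enc e = x;
  g_full : forall e, e \in call C }.

Section Fld.
Variable F : fieldType.
Variable C : cf.
Variable enc : cE C -> F.
Hypothesis G : good enc.
Let enc_add := g_add G.
Let enc_mul := g_mul G.
Let enc0 := g_0 G.
Let enc_inj := g_inj G.
Let enc_surj := g_surj G.
Let call_full := g_full G.

Definition vecE (v : V C) : 'rV[F]_4 :=
  let '(a,b,c,d) := v in vec4 (enc a) (enc b) (enc c) (enc d).

Lemma in_allV v : v \in allV C.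
Proof.
case: v => [[[a b] c] d]; apply: allpairs_f; last exact: call_full.
apply: allpairs_f; last exact: call_full.
by apply: allpairs_f; exact: call_full.
Qed.

Lemma vec4_add (a b c d a' b' c' d' : F) :
  vec4 a b c d + vec4 a' b' c' d' = vec4 (a + a') (b + b') (c + c') (d + d').
Proof. by apply/rowP => i; rewrite !mxE; case: i => [[|[|[|[|]]]] ?]. Qed.

Lemma vec4_sc (k a b c d : F) :
  k *: vec4 a b c d = vec4 (k * a) (k * b) (k * c) (k * d).
Proof. by apply/rowP => i; rewrite !mxE; case: i => [[|[|[|[|]]]] ?]. Qed.

Lemma vec4_inj (a b c d a' b' c' d' : F) :
  vec4 a b c d = vec4 a' b' c' d' -> [/\ a = a', b = b', c = c' & d = d'].
Proof.
move=> /rowP H; split.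
- by have := H 0; rewrite !mxE.
- by have := H 1; rewrite !mxE.
- by have := H 2%:R; rewrite !mxE.
- by have := H 3%:R; rewrite !mxE.
Qed.

Lemma vecE_add u v : vecE (vadd u v) = vecE u + vecE v.
Proof.
by case: u => [[[a b] c] d]; case: v => [[[a' b'] c'] d']; rewrite /= vec4_add !enc_add.
Qed.

Lemma vecE_sc k u : vecE (vsc k u) = enc k *: vecE u.
Proof. by case: u => [[[a b] c] d]; rewrite /= vec4_sc !enc_mul. Qed.

Lemma vecE_inj : injective vecE.
Proof.
case=> [[[a b] c] d]; case=> [[[a' b'] c'] d'] /= /vec4_inj [].
by move=> /enc_inj-> /enc_inj-> /enc_inj-> /enc_inj->.
Qed.

Lemma vecE0 : vecE (vz C) = 0.
Proof. by apply/rowP => i; rewrite /= !mxE enc0; case: i => [[|[|[|[|]]]] ?]. Qed.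

Lemma vecE_surj (w : 'rV[F]_4) : exists v, w = vecE v.
Proof.
have [a _ ea] := enc_surj (w 0 0); have [b _ eb] := enc_surj (w 0 1).
have [c _ ec] := enc_surj (w 0 2%:R); have [d _ ed] := enc_surj (w 0 3%:R).
exists (a, b, c, d); apply/rowP => i; rewrite /= !mxE.
by case: i => [[|[|[|[|]]]] Hi] //=; rewrite ?ea ?eb ?ec ?ed //; congr (w 0 _); apply: val_inj.
Qed.

Lemma vecE_eq0 v : (vecE v == 0) = (v == vz C).
Proof. by rewrite -vecE0; apply/eqP/eqP => [/vecE_inj|->]. Qed.

Lemma vdotE u c : vecE u *m (vecE c)^T = (enc (vdot u c))%:M.
Proof.
case: u => [[[a b] c'] d]; case: c => [[[a' b'] c''] d'].
apply/matrixP => i j; rewrite !ord1 !mxE /= !enc_add !enc_mul.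
rewrite !big_ord_recr big_ord0 /= !mxE /= add0r.
by rewrite !addrA.
Qed.

Lemma scal1_eq0 (a : F) : (a%:M == 0 :> 'M[F]_1) = (a == 0).
Proof.
apply/eqP/eqP => [/matrixP/(_ 0 0)|->]; last by rewrite raddf0.
by rewrite !mxE.
Qed.

Lemma enc_eq0 e : (enc e == 0) = (e == c0 C).
Proof. by rewrite -enc0; apply/eqP/eqP => [/enc_inj|->]. Qed.

Lemma sub1E z u : (vecE z <= vecE u)%MS = (z \in sp1 u).
Proof.
apply/sub_rVP/mapP => [[a ea]|[k _ ->]].
- have [k _ ek] := enc_surj a; exists k; first exact: call_full.
  by apply: vecE_inj; rewrite vecE_sc ek.
- by exists (enc k); rewrite vecE_sc.
Qed.

Lemma sub2E z u v :
  (vecE z <= col_mx (vecE u) (vecE v))%MS = (z \in sp2 u v).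
Proof.
have -> : (vecE z <= col_mx (vecE u) (vecE v))%MS = (vecE z <= vecE u + vecE v)%MS.
  by rewrite addsmxE.
apply/sub_addsmxP/allpairsP => [[[x y] /= e]|[[k l] [_ _ /= ->]]].
- have [k _ ek] := enc_surj (x 0 0); have [l _ el] := enc_surj (y 0 0).
  exists (k, l); split; rewrite /= ?call_full //.
  apply: vecE_inj; rewrite e vecE_add !vecE_sc ek el.
  by rewrite -!mul_scalar_mx -!mx11_scalar.
- exists ((enc k)%:M, (enc l)%:M) => /=.
  by rewrite vecE_add !vecE_sc !mul_scalar_mx.
Qed.

Lemma subker2E z c d :
  (vecE z <= kermx (row_mx (vecE c)^T (vecE d)^T))%MS =
  (vdot z c == c0 C) && (vdot z d == c0 C).
Proof. by rewrite sub_kermx mul_mx_row row_mx_eq0 !vdotE !scal1_eq0 !enc_eq0. Qed.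

Lemma subker1E z c :
  (vecE z <= kermx (vecE c)^T)%MS = (vdot z c == c0 C).
Proof. by rewrite sub_kermx vdotE scal1_eq0 enc_eq0. Qed.

Lemma subby m n (A : 'M[F]_(m,4)) (B : 'M[F]_(n,4)) fa fb :
  (forall z, (vecE z <= A)%MS = fa z) -> (forall z, (vecE z <= B)%MS = fb z) ->
  (A <= B)%MS = subsp fa fb.
Proof.
move=> hA hB; apply/idP/allP => [sAB z _|H].
- by apply/implyP; rewrite -hA -hB => /submx_trans; apply.
- apply/row_subP => i; have [v ev] := vecE_surj (row i A).
  rewrite ev hB; apply: (implyP (H v (in_allV v))); by rewrite -hA -ev row_sub.
Qed.

Lemma eqsp_sub (f g : V C -> bool) : eqsp f g = subsp f g && subsp g f.
Proof.
rewrite /eqsp /subsp -all_predI; apply: eq_all => z /=.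
by case: (f z); case: (g z).
Qed.

Lemma eqby m n (A : 'M[F]_(m,4)) (B : 'M[F]_(n,4)) fa fb :
  (forall z, (vecE z <= A)%MS = fa z) -> (forall z, (vecE z <= B)%MS = fb z) ->
  (A == B)%MS = eqsp fa fb.
Proof. by move=> hA hB; rewrite eqsp_sub -(subby hA hB) -(subby hB hA). Qed.

Definition LM (p : V C * V C) : 'M[F]_4 := <<col_mx (vecE p.1) (vecE p.2)>>%MS.

Lemma subLM p : forall z, (vecE z <= LM p)%MS = (z \in sp2 p.1 p.2).
Proof. by move=> z; rewrite /LM genmxE sub2E. Qed.

Lemma LM_eq p q : (LM p == LM q) = lt_eq p q.
Proof.
rewrite /lt_eq -(eqby (subLM p) (subLM q)).
apply/eqP/idP => [->|/genmxP]; first by rewrite submx_refl.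
by rewrite /LM !genmx_id.
Qed.

Lemma rank_col p : nd p -> \rank (col_mx (vecE p.1) (vecE p.2)) = 2%N.
Proof.
case/andP => p1 p2.
have s1 : (vecE p.1 <= col_mx (vecE p.1) (vecE p.2))%MS.
  by have := addsmxSl (vecE p.1) (vecE p.2); rewrite addsmxE.
have := ltn_leqif (mxrank_leqif_sup s1).
rewrite col_mx_sub submx_refl sub1E (negbTE p2) rank_rV vecE_eq0 p1 /= => lt1.
by apply/eqP; rewrite eqn_leq lt1 andbT; exact: rank_leq_row.
Qed.

Lemma line_rep (L : 'M[F]_4) : <<L>>%MS = L -> \rank L = 2%N ->
  exists p, nd p /\ L = LM p.
Proof.
move=> gL rL.
have : ~~ (L <= (0 : 'M[F]_4))%MS.
  by rewrite submx0; apply/eqP => L0; move: rL; rewrite L0 mxrank0.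
case/row_subPn => i; rewrite submx0 => ri0.
have [x ex] := vecE_surj (row i L).
have : ~~ (L <= vecE x)%MS.
  by apply/negP => /mxrankS; rewrite rL rank_rV; case: (_ != 0).
case/row_subPn => j nj; have [y ey] := vecE_surj (row j L).
have ndp : nd (x, y).
  apply/andP; split; [by rewrite /= -vecE_eq0 -ex | by rewrite /= -sub1E -ey].
exists (x, y); split => //.
have sCL : (col_mx (vecE x) (vecE y) <= L)%MS by rewrite col_mx_sub -ex -ey !row_sub.
rewrite -gL /LM; apply/genmxP; rewrite sCL andbT.
by rewrite -(mxrank_leqif_sup sCL).2 (rank_col ndp) rL.
Qed.
Lemma lt_eqE (p q : V C * V C) : lt_eq p q = lt_eq2 p q.
Proof.
rewrite /lt_eq -(eqby (fun z => @sub2E z p.1 p.2) (fun z => @sub2E z q.1 q.2)).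
by rewrite !col_mx_sub !sub2E /lt_eq2 !andbA.
Qed.
End Fld.

Definition pcE (C : cf) (e : cE C) : V C :=
  (cmul e (cmul e e), cmul e e, e, c1 C).
Definition oscE (C : cf) (e : cE C) : V C :=
  (c1 C, e, cmul e e, cmul e (cmul e e)).
Definition tdE (C : cf) (e : cE C) : V C := (cmul e e, c0 C, c1 C, c0 C).

Section Fld2.
Variable F : fieldType.
Variable C : cf.
Variable enc : cE C -> F.
Hypothesis enc_mul : forall a b, enc (cmul a b) = enc a * enc b.
Hypothesis enc0 : enc (c0 C) = 0.
Hypothesis enc1 : enc (c1 C) = 1.
Hypothesis char2 : (2%:R : F) = 0.

Lemma oppr_c2 (x : F) : - x = x.
Proof. by apply/eqP; rewrite eq_sym -subr_eq0 opprK -mulr2n -mulr_natr char2 mulr0. Qed.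

Lemma three_c2 : (3%:R : F) = 1.
Proof. by rewrite -[3%N]/(2 + 1)%N natrD char2 add0r. Qed.

Lemma PcE e : Pc (Some (enc e)) = vecE enc (pcE e).
Proof. by rewrite /= !enc_mul enc1 -!expr2 -exprS. Qed.

Lemma oscEq e : osc (Some (enc e)) = vecE enc (oscE e).
Proof. by rewrite /= !enc_mul enc1 three_c2 !mul1r !oppr_c2 -!expr2 -exprS. Qed.

Lemma TdirE e : Tdir (Some (enc e)) = vecE enc (tdE e).
Proof. by rewrite /= !enc_mul enc0 enc1 three_c2 char2 mul1r mul0r -expr2. Qed.
End Fld2.

Definition C2 : cf := CF [:: false; true] xorb andb false true.
Definition enc2 (b : cE C2) : 'F_2 := (b : bool)%:R.

Lemma F2_cases (x : 'F_2) : x = 0 \/ x = 1.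
Proof. by case: x => [[|[|n]]] //= H; [left|right]; apply/val_inj. Qed.
Lemma F2_11 : (1 + 1 : 'F_2) = 0. Proof. by apply/eqP. Qed.
Lemma F2_char2 : (2%:R : 'F_2) = 0. Proof. by apply/eqP. Qed.

Lemma enc2_add (a b : cE C2) : enc2 (cadd a b) = enc2 a + enc2 b.
Proof. by case: a; case: b; rewrite /enc2 /= ?F2_11 ?addr0 ?add0r. Qed.
Lemma enc2_mul (a b : cE C2) : enc2 (cmul a b) = enc2 a * enc2 b.
Proof. by case: a; case: b; rewrite /enc2 /= ?mulr1 ?mulr0. Qed.
Lemma enc2_0 : enc2 (c0 C2) = 0. Proof. by []. Qed.
Lemma enc2_1 : enc2 (c1 C2) = 1. Proof. by []. Qed.
Lemma enc2_inj : injective (enc2 : cE C2 -> _).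
Proof. by case; case => // /eqP; rewrite /enc2 /= ?oner_eq0 // eq_sym oner_eq0. Qed.
Lemma enc2_surj x : exists2 e, e \in call C2 & enc2 e = x.
Proof. by case: (F2_cases x) => ->; [exists false | exists true]. Qed.
Lemma call2_full (e : cE C2) : e \in call C2. Proof. by case: e. Qed.

Notation vec2 := (vecE enc2).
Notation LM2 := (LM enc2).

Definition optsE (C : cf) : seq (option (cE C)) := None :: map Some (call C).

Lemma exists_seq (T : finType) (S : eqType) (g : S -> T) (s : seq S) (P : pred T) :
  (forall t, exists2 e, e \in s & t = g e) -> [exists t, P t] = has (fun e => P (g e)) s.
Proof.
move=> sg; apply/existsP/hasP => [[t Pt]|[e _ Pe]]; last by exists (g e).
by have [e se et] := sg t; exists e; rewrite // -et.
Qed.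

Lemma card_seq (T : finType) (S : eqType) (g : S -> T) (s : seq S) (P : pred T) :
  injective g -> uniq s -> (forall t, exists2 e, e \in s & t = g e) ->
  #|[pred t | P t]| = count (fun e => P (g e)) s.
Proof.
move=> ig us sg.
have u' : uniq (filter P (map g s)) by rewrite filter_uniq // map_inj_uniq.
have -> : count (fun e => P (g e)) s = count P (map g s) by rewrite count_map.
rewrite -size_filter -(card_uniqP u'); apply: eq_card => t.
rewrite !inE mem_filter; have [e se ->] := sg t.
by rewrite map_f ?andbT.
Qed.

Lemma opt2_surj (t : option 'F_2) : exists2 e, e \in optsE C2 & t = omap enc2 e.
Proof.
case: t => [x|]; last by exists None.
by case: (F2_cases x) => ->; [exists (Some false) | exists (Some true)].
Qed.

Lemma omap2_inj : injective (omap enc2).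
Proof. by case=> [a|]; case=> [b|] //= [] /enc2_inj ->. Qed.

Definition pcO (t : option (cE C2)) : V C2 :=
  match t with Some e => pcE e | None => (true, false, false, false) end.
Definition oscO (t : option (cE C2)) : V C2 :=
  match t with Some e => oscE e | None => (false, false, false, true) end.
Definition tdO (t : option (cE C2)) : V C2 :=
  match t with Some e => tdE e | None => (false, true, false, false) end.

Lemma PcO t : Pc (omap enc2 t) = vec2 (pcO t).
Proof. case: t => [e|] //=; exact: (PcE enc2_mul enc2_1). Qed.
Lemma oscO_E t : osc (omap enc2 t) = vec2 (oscO t).
Proof. case: t => [e|] //=; exact: (oscEq enc2_mul enc2_1 F2_char2). Qed.
Lemma tdO_E t : Tdir (omap enc2 t) = vec2 (tdO t).
Proof. case: t => [e|] //=; exact: (TdirE enc2_mul enc2_0 enc2_1 F2_char2). Qed.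

Lemma good2 : good enc2.
Proof.
split; [exact: enc2_add | exact: enc2_mul | exact: enc2_0 | exact: enc2_inj
       | exact: enc2_surj | exact: call2_full].
Qed.

Definition R4 := (V C2 * V C2 * V C2 * V C2)%type.

Definition rows4 (r : R4) : 'M['F_2]_4 :=
  let '(r0,r1,r2,r3) := r in
  \matrix_(i < 4, j < 4) ([:: vec2 r0; vec2 r1; vec2 r2; vec2 r3]`_i) 0 j.

Lemma vmulE z r : vec2 z *m rows4 r = vec2 (vmul z r).
Proof.
case: r => [[[r0 r1] r2] r3]; case: z => [[[a b] c] d].
rewrite /vmul /= !(vecE_add good2) !(vecE_sc good2).
apply/rowP => j; rewrite !mxE !big_ord_recr big_ord0 /= !mxE /= add0r.
by rewrite !addrA.
Qed.

Lemma rows4_surj (A : 'M['F_2]_4) : exists r, A = rows4 r.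
Proof.
have [x0 e0] := vecE_surj good2 (row 0 A).
have [x1 e1] := vecE_surj good2 (row 1 A).
have [x2 e2] := vecE_surj good2 (row 2%:R A).
have [x3 e3] := vecE_surj good2 (row 3%:R A).
exists (x0, x1, x2, x3); apply/matrixP => i j; rewrite /= mxE.
case: i => [[|[|[|[|]]]] Hi] //=; rewrite -?e0 -?e1 -?e2 -?e3 mxE //;
  congr (A _ j); exact: val_inj.
Qed.


Definition cub_ok (r : R4) :=
  all (fun e => has (fun e' => eq1 (vmul (pcO e) r) (pcO e')) (optsE C2)) (optsE C2) &&
  all (fun e' => has (fun e => eq1 (vmul (pcO e) r) (pcO e')) (optsE C2)) (optsE C2).
Definition unit_ok (r : R4) :=
  all (fun z => (vmul z r == vz C2) ==> (z == vz C2)) (allV C2).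
Definition gq_ok r := cub_ok r && unit_ok r.

Lemma unitE r : (rows4 r \in unitmx) = unit_ok r.
Proof.
rewrite -row_free_unit -kermx_eq0 -submx0.
rewrite (subby good2 (fa := fun z => vmul z r == vz C2) (fb := fun z => z == vz C2)) //.
- by move=> z; rewrite sub_kermx vmulE (vecE_eq0 good2).
- by move=> z; rewrite submx0 (vecE_eq0 good2).
Qed.

Lemma gen1_eq (a b : V C2) : (<<vec2 a>>%MS == <<vec2 b>>%MS) = eq1 a b.
Proof.
rewrite /eq1 -(eqby good2 (A := vec2 a) (B := vec2 b)); last first.
- by move=> z; rewrite (sub1E good2).
- by move=> z; rewrite (sub1E good2).
by apply/eqP/idP => [/genmxP|/genmxP].
Qed.

Lemma in_opts (e : option bool) : e \in optsE C2.
Proof. by case: e => [[]|]. Qed.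

Lemma cubicE : cubic 'F_2 = [set <<vec2 (pcO e)>>%MS | e : option bool].
Proof.
apply/setP => X; apply/imsetP/imsetP => [[t _ ->]|[e _ ->]].
- have [e se ->] := opt2_surj t; exists e => //; by rewrite PcO.
- by exists (omap enc2 e); rewrite // PcO.
Qed.

Lemma GqE r : (rows4 r \in Gq 'F_2) = gq_ok r.
Proof.
rewrite inE unitE /gq_ok andbC; congr (_ && _).
have -> : [set <<X *m rows4 r>>%MS | X in cubic 'F_2] =
          [set <<vec2 (vmul (pcO e) r)>>%MS | e : option bool].
  rewrite cubicE -imset_comp; apply: eq_imset => a /=.
  apply/genmxP; rewrite -vmulE.
  by apply/andP; split; rewrite (eqmxMr _ (genmxE _)) submx_refl.
rewrite cubicE eqEsubset; congr (_ && _).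
- apply/subsetP/allP => [H a _|H X /imsetP[a _ ->]].
  + have /imsetP[b _ /eqP] : <<vec2 (vmul (pcO a) r)>>%MS \in
        [set <<vec2 (pcO e)>>%MS | e : option bool] by apply: H; apply/imsetP; exists a.
    by rewrite gen1_eq => e; apply/hasP; exists b; rewrite ?in_opts.
  + have /hasP[b _] := H a (in_opts a); rewrite -gen1_eq => /eqP ->.
    by apply/imsetP; exists b.
- apply/subsetP/allP => [H b _|H X /imsetP[b _ ->]].
  + have /imsetP[a _ /eqP] : <<vec2 (pcO b)>>%MS \in
        [set <<vec2 (vmul (pcO e) r)>>%MS | e : option bool] by apply: H; apply/imsetP; exists b.
    by rewrite eq_sym gen1_eq => e; apply/hasP; exists a; rewrite ?in_opts.
  + have /hasP[a _] := H b (in_opts b); rewrite -gen1_eq => /eqP <-.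
    by apply/imsetP; exists a.
Qed.

Definition img (r : R4) (p : V C2 * V C2) := (vmul p.1 r, vmul p.2 r).

Lemma LM_mul p r : <<LM2 p *m rows4 r>>%MS = LM2 (img r p).
Proof.
rewrite /LM; apply/genmxP; rewrite /img /= -!vmulE -mul_col_mx.
by apply/andP; split; rewrite (eqmxMr _ (genmxE _)) submx_refl.
Qed.

Notation P2 := (V C2 * V C2)%type.

Definition allP2 : seq P2 := [seq (x, y) | x <- allV C2, y <- allV C2].
Definition b4 (n : nat) : V C2 := (odd n, odd (n %/ 2)%N, odd (n %/ 4)%N, odd (n %/ 8)%N).
Definition mk (s : seq (nat * nat)) : seq P2 := map (fun p => (b4 p.1, b4 p.2)) s.
Definition l35 : seq P2 := mk [:: (8, 4); (8, 2); (8, 6); (8, 1); (8, 5); (8, 3); (8, 7); (4, 2); (4, 10); (4, 1); (4, 9); (4, 3); (4, 11); (12, 2); (12, 10); (12, 1); (12, 9); (12, 3); (12, 11); (2, 1); (2, 9); (2, 5); (2, 13); (10, 1); (10, 9); (10, 5); (10, 13); (6, 1); (6, 9); (6, 5); (6, 13); (14, 1); (14, 9); (14, 5); (14, 13)]%N.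

Lemma in_allP2 (p : P2) : p \in allP2.
Proof.
case: p => x y; apply: (@allpairs_f _ _ _ (fun x y => (x, y))); exact: (in_allV good2).
Qed.

Lemma nd35 : all (@nd C2) l35. Proof. vm_compute. reflexivity. Qed.
Lemma cov35 : all (fun p => nd p ==> has (lt_eq2 p) l35) allP2.
Proof. vm_compute. reflexivity. Qed.

Definition Lset (s : seq P2) : {set 'M['F_2]_4} := [set X in map LM2 s].

Lemma in_Lset X s : (X \in Lset s) = (X \in map LM2 s).
Proof. by rewrite inE. Qed.

Lemma LM2_lines p : nd p -> LM2 p \in lines 'F_2.
Proof.
move=> ndp; rewrite inE /LM genmx_id eqxx /=.
by rewrite genmxE (rank_col good2 ndp).
Qed.

Lemma linesE : lines 'F_2 = Lset l35.
Proof.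
apply/setP => L; rewrite in_Lset; apply/idP/mapP => [|[q q35 ->]].
- rewrite inE => /andP[/eqP gL /eqP rL].
  have [p [ndp ->]] := line_rep good2 gL rL.
  have /hasP[q q35 e] := implyP (allP cov35 p (in_allP2 p)) ndp.
  by exists q => //; apply/eqP; rewrite (LM_eq good2) (lt_eqE good2).
- exact: LM2_lines (allP nd35 q q35).
Qed.

Definition inj_ok (s : seq P2) :=
  uniq s && all (fun p => all (fun q => lt_eq p q ==> (p == q)) s) s.

Lemma card_Lset s : inj_ok s -> #|Lset s| = size s.
Proof.
case/andP => us ok.
have ui : uniq (map LM2 s).
  rewrite map_inj_in_uniq // => p q ps qs /eqP; rewrite (LM_eq good2) => e.
  exact/eqP/(implyP (allP (allP ok p ps) q qs)).
by rewrite cardsE (card_uniqP ui) size_map.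
Qed.

Lemma pred_Lset (P : pred 'M['F_2]_4) (Pb : pred P2) :
  (forall L, P L -> L \in lines 'F_2) -> (forall q, q \in l35 -> P (LM2 q) = Pb q) ->
  [set L | P L] = Lset (filter Pb l35).
Proof.
move=> Pl PE; apply/setP => L; rewrite inE in_Lset.
apply/idP/mapP => [PL|[q]]; last by rewrite mem_filter => /andP[Pq q35] ->; rewrite PE.
move: (Pl _ PL); rewrite linesE in_Lset => /mapP[q q35 eL].
by exists q => //; rewrite mem_filter -PE // -eL PL.
Qed.

Lemma Lset_cat s1 s2 : Lset s1 :|: Lset s2 = Lset (s1 ++ s2).
Proof. by apply/setP => X; rewrite !inE map_cat mem_cat. Qed.

Lemma LMcol_eq q a b : (LM2 q == col_mx (vec2 a) (vec2 b))%MS = lt_eq q (a, b).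
Proof. by rewrite (eqby good2 (subLM good2 q) (fun z => sub2E good2 z a b)). Qed.

Lemma LMker2_eq q c d :
  (LM2 q == kermx (row_mx (vec2 c)^T (vec2 d)^T))%MS =
  eqsp (fun z => z \in sp2 q.1 q.2) (fun z => (vdot z c == false) && (vdot z d == false)).
Proof. by rewrite (eqby good2 (subLM good2 q) (fun z => subker2E good2 z c d)). Qed.

Lemma in_plane2 q c :
  in_plane (LM2 q) (vec2 c) = subsp (fun z => z \in sp2 q.1 q.2) (fun z => vdot z c == false).
Proof.
by rewrite /in_plane -sub_kermx (subby good2 (subLM good2 q) (fun z => subker1E good2 z c)).
Qed.

Lemma card_opt (h : option bool -> 'M['F_2]_4) (Q : pred (option bool)) :
  injective h -> #|[set h e | e in [pred e | Q e]]| = count Q (optsE C2).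
Proof.
move=> ih; rewrite card_imset //.
by rewrite (@card_seq _ _ id (optsE C2)) //= => t; exists t; rewrite ?in_opts.
Qed.

Definition opts := optsE C2.

Definition pc_inj_ok := all (fun e => all (fun e' => eq1 (pcO e) (pcO e') ==> (e == e')) opts) opts.
Definition osc_inj_ok := all (fun e => all (fun e' => eq1 (oscO e) (oscO e') ==> (e == e')) opts) opts.
Lemma pc_osc_ok : pc_inj_ok && osc_inj_ok. Proof. vm_compute. reflexivity. Qed.

Lemma pc_inj : injective (fun e : option bool => <<vec2 (pcO e)>>%MS).
Proof.
move=> e e' /eqP; rewrite gen1_eq => h; have /andP[ok _] := pc_osc_ok.
exact/eqP/(implyP (allP (allP ok e (in_opts e)) e' (in_opts e'))).
Qed.

Lemma osc_inj : injective (fun e : option bool => <<vec2 (oscO e)>>%MS).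
Proof.
move=> e e' /eqP; rewrite gen1_eq => h; have /andP[_ ok] := pc_osc_ok.
exact/eqP/(implyP (allP (allP ok e (in_opts e)) e' (in_opts e'))).
Qed.

Definition ncubb (q : P2) := count (fun e => pcO e \in sp2 q.1 q.2) opts.
Definition nGb (q : P2) :=
  count (fun e => subsp (fun z => z \in sp2 q.1 q.2) (fun z => vdot z (oscO e) == false)) opts.

Lemma ncubE q : ncub (LM2 q) = ncubb q.
Proof.
rewrite /ncub /ncubb /opts -(card_opt (h := fun e => <<vec2 (pcO e)>>%MS)); last exact: pc_inj.
apply: eq_card => X; rewrite inE cubicE.
apply/andP/imsetP => [[/imsetP[e _ ->] sX]|[e]].
- by exists e => //; rewrite inE -(subLM good2) -(genmxE (vec2 (pcO e))).
- rewrite inE -(subLM good2) => se ->; split; first by apply/imsetP; exists e.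
  by rewrite genmxE.
Qed.

Lemma nGammaE q : nGamma (LM2 q) = nGb q.
Proof.
rewrite /nGamma /nGb /opts -(card_opt (h := fun e => <<vec2 (oscO e)>>%MS)); last exact: osc_inj.
apply: eq_card => X.
apply/imsetP/imsetP => [[t]|[e]].
- rewrite inE; have [e _ ->] := opt2_surj t; rewrite oscO_E in_plane2 => H ->.
  by exists e; rewrite // inE.
- rewrite inE -in_plane2 -oscO_E => H ->; exists (omap enc2 e); last by rewrite oscO_E.
  by rewrite inE.
Qed.


Definition addK (a b : bool * bool) := (xorb a.1 b.1, xorb a.2 b.2).
Definition mulK (a b : bool * bool) :=
  (xorb (a.1 && b.1) (a.2 && b.2), xorb (xorb (a.1 && b.2) (a.2 && b.1)) (a.2 && b.2)).
Definition CK : cf :=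
  CF [:: (false, false); (true, false); (false, true); (true, true)] addK mulK
     (false, false) (true, false).

Definition liftV (v : V C2) : V CK :=
  let '(a, b, c, d) := v in ((a, false), (b, false), (c, false), (d, false)).

Definition ICb (q : P2) :=
  has (fun e : cE CK => (e \notin [:: (false, false); (true, false)]) &&
     lt_eq2 (liftV q.1, liftV q.2) (pcE e, pcE (cmul e e))) (call CK).
Definition IAb (q : P2) :=
  has (fun e : cE CK => (e \notin [:: (false, false); (true, false)]) &&
     eqsp (fun z => z \in sp2 (liftV q.1) (liftV q.2))
          (fun z => (vdot z (oscE e) == c0 CK) && (vdot z (oscE (cmul e e)) == c0 CK)))
     (call CK).

Section KF.
Variable K : finFieldType.
Variable f : {rmorphism 'F_2 -> K}.
Hypothesis hK : #|K| = 4%N.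
Variable w : K.
Hypothesis hw0 : w != 0.
Hypothesis hw1 : w != 1.

Lemma charK : (2%:R : K) = 0.
Proof. by rewrite -(rmorph_nat f) F2_char2 rmorph0. Qed.

Definition encK (e : cE CK) : K := (e.1 : bool)%:R + (e.2 : bool)%:R * w.

Lemma encK_add (a b : cE CK) : encK (cadd a b) = encK a + encK b.
Proof.
have h2 := charK.
by case: a => [[] []]; case: b => [[] []]; rewrite /encK /= ?mulr1n ?mulr0n; ring: h2.
Qed.

Lemma encK_eq0 (e : cE CK) : encK e = 0 -> e = (false, false).
Proof.
case: e => [[] []] //=; rewrite /encK /= ?mulr1n ?mulr0n ?mul1r ?mul0r ?addr0 ?add0r.
- move=> /eqP; rewrite addr_eq0 => /eqP h; case/negP: hw1.
  by rewrite -[w](oppr_c2 charK) -h.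
- by move/eqP; rewrite oner_eq0.
- by move/eqP; rewrite (negbTE hw0).
Qed.

Lemma encK_inj : injective encK.
Proof.
move=> a b e; have : encK (cadd a b) = 0.
  by rewrite encK_add e -mulr2n -mulr_natr charK mulr0.
move/encK_eq0; case: a {e} => [[] []]; case: b => [[] []] //.
Qed.

Lemma encK_surj x : exists2 e, e \in call CK & encK e = x.
Proof.
pose S := [set encK (e : bool * bool) | e : bool * bool].
have cS : #|S| = 4%N.
  by rewrite card_imset; [rewrite card_prod card_bool | exact: encK_inj].
have eS : S = setT by apply/eqP; rewrite eqEcard subsetT cardsT hK cS.
have : x \in S by rewrite eS inE.
by case/imsetP => e _ ->; exists e => //; case: e => [[] []].
Qed.

Lemma hw : w ^+ 2 = w + 1.
Proof.
have h2 := charK.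
have [[[] []] _] := encK_surj (w ^+ 2); rewrite /encK /= ?mulr1n ?mulr0n ?mul1r ?mul0r ?addr0 ?add0r.
- by move=> <-; rewrite addrC.
- move=> e; have : (w + 1) ^+ 2 = 0 by rewrite -[RHS](_ : w ^+ 2 + 1 = 0); [ring: h2 | rewrite -e -mulr2n -mulr_natr h2 mulr0].
  move/eqP; rewrite expf_eq0 /= addr_eq0 => /eqP h; case/negP: hw1.
  by rewrite h (oppr_c2 charK).
- move=> e; have : w * (w - 1) = 0 by rewrite mulrBr mulr1 -expr2 -e subrr.
  by move/eqP; rewrite mulf_eq0 subr_eq0 (negbTE hw0) (negbTE hw1).
- move=> e; have : w ^+ 2 == 0 by rewrite -e.
  by rewrite expf_eq0 /= (negbTE hw0).
Qed.

Lemma encK_mul (a b : cE CK) : encK (cmul a b) = encK a * encK b.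
Proof.
have h2 := charK; have h3 := hw.
by case: a => [[] []]; case: b => [[] []]; rewrite /encK /= ?mulr1n ?mulr0n; ring: h2 h3.
Qed.

Lemma goodK : good encK.
Proof.
split; [exact: encK_add | exact: encK_mul | by rewrite /encK /= mulr0n mul0r addr0
       | exact: encK_inj | exact: encK_surj | by case=> [[] []]].
Qed.

Lemma encK1 : encK (c1 CK) = 1.
Proof. by rewrite /encK /= mulr0n mul0r addr0. Qed.

Lemma f_enc2 (b : cE C2) : f (enc2 b) = encK (b, false).
Proof. by rewrite /enc2 rmorph_nat /encK /= mulr0n mul0r addr0. Qed.

Lemma map_vec2 v : map_mx f (vec2 v) = vecE encK (liftV v).
Proof.
case: v => [[[a b] c] d]; apply/rowP => i; rewrite !mxE.
by case: i => [[|[|[|[|]]]] ?] //=; rewrite f_enc2.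
Qed.

Lemma codomK (e : cE CK) :
  (encK e \in codom f) = (e \in [:: (false, false); (true, false)]).
Proof.
apply/codomP/idP => [[x]|].
- case: (F2_cases x) => -> ; rewrite ?rmorph0 ?rmorph1.
  + by rewrite -(g_0 goodK) => /encK_inj ->.
  + by rewrite -encK1 => /encK_inj ->.
- rewrite !inE; case/orP => /eqP ->; [exists 0 | exists 1].
  + by rewrite rmorph0 /encK /= mulr0n mul0r addr0.
  + by rewrite rmorph1 encK1.
Qed.

Lemma subMapLM q z :
  (vecE encK z <= map_mx f (LM2 q))%MS = (z \in sp2 (liftV q.1) (liftV q.2)).
Proof. by rewrite /LM map_genmx genmxE map_col_mx !map_vec2 (sub2E goodK). Qed.

Lemma IC_E q : is_IC f (LM2 q) = (LM2 q \in lines 'F_2) && ICb q.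
Proof.
rewrite /is_IC; congr (_ && _).
rewrite (@exists_seq _ _ encK (call CK)); last first.
  by move=> t; have [e se <-] := encK_surj t; exists e.
apply: eq_has => e; rewrite codomK; congr (_ && _).
have -> : encK e ^+ #|'F_2| = encK (cmul e e) by rewrite card_Fp // expr2 encK_mul.
rewrite !(PcE encK_mul encK1).
rewrite (eqby goodK (subMapLM q) (fun z => sub2E goodK z _ _)).
by rewrite -(lt_eqE goodK).
Qed.

Lemma IA_E q : is_IA f (LM2 q) = (LM2 q \in lines 'F_2) && IAb q.
Proof.
rewrite /is_IA; congr (_ && _).
rewrite (@exists_seq _ _ encK (call CK)); last first.
  by move=> t; have [e se <-] := encK_surj t; exists e.
apply: eq_has => e; rewrite codomK; congr (_ && _).
have -> : encK e ^+ #|'F_2| = encK (cmul e e) by rewrite card_Fp // expr2 encK_mul.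
rewrite !(oscEq encK_mul encK1 charK).
by rewrite (eqby goodK (subMapLM q) (fun z => subker2E goodK z _ _)).
Qed.
End KF.


Definition RCb (q : P2) :=
  has (fun e => has (fun e' => ~~ eq1 (pcO e) (pcO e') && lt_eq2 q (pcO e, pcO e')) opts) opts.
Definition Trb (q : P2) := has (fun e => lt_eq2 q (pcO e, tdO e)) opts.
Definition RAb (q : P2) :=
  has (fun e => has (fun e' => ~~ eq1 (oscO e) (oscO e') &&
    eqsp (fun z => z \in sp2 q.1 q.2)
         (fun z => (vdot z (oscO e) == false) && (vdot z (oscO e') == false))) opts) opts.
Definition plv : V C2 := (false, true, true, false).
Definition planeb (q : P2) := subsp (fun z => z \in sp2 q.1 q.2) (fun z => vdot z plv == false).
Definition UGb q := [&& ncubb q == 1%N, ~~ Trb q & nGb q != 0%N].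
Definition UG2b q := UGb q && planeb q.
Definition UG1b q := UGb q && ~~ planeb q.
Definition UnGb q := (ncubb q == 1%N) && (nGb q == 0%N).
Definition EGb q := (ncubb q == 0%N) && (nGb q == 1%N).
Definition EnGb q := [&& ncubb q == 0%N, nGb q == 0%N, ~~ ICb q & ~~ IAb q].


Definition lRC := mk [:: (8, 1); (8, 7); (14, 1)]%N.
Definition lTr := mk [:: (8, 4); (2, 1); (10, 5)]%N.
Definition lRA := mk [:: (4, 2); (12, 10); (6, 5)]%N.
Definition lUG2 := mk [:: (8, 6); (6, 1); (6, 9)]%N.
Definition lUG1 := mk [:: (8, 2); (4, 1); (12, 3)]%N.
Definition lUnG := mk [:: (8, 5); (8, 3); (4, 11); (12, 1); (2, 13); (10, 1)]%N.
Definition lEG := mk [:: (4, 10); (4, 3); (12, 2); (12, 9); (2, 5); (10, 9)]%N.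
Definition lEnG := mk [:: (4, 9); (12, 11); (2, 9); (10, 13); (14, 5); (14, 13)]%N.
Definition lIC := mk [:: (6, 13)]%N.
Definition lIA := mk [:: (14, 9)]%N.

Lemma fRC : filter RCb l35 = lRC. Proof. vm_compute. reflexivity. Qed.
Lemma fTr : filter Trb l35 = lTr. Proof. vm_compute. reflexivity. Qed.
Lemma fRA : filter RAb l35 = lRA. Proof. vm_compute. reflexivity. Qed.
Lemma fUG2 : filter UG2b l35 = lUG2. Proof. vm_compute. reflexivity. Qed.
Lemma fUG1 : filter UG1b l35 = lUG1. Proof. vm_compute. reflexivity. Qed.
Lemma fUnG : filter UnGb l35 = lUnG. Proof. vm_compute. reflexivity. Qed.
Lemma fEG : filter EGb l35 = lEG. Proof. vm_compute. reflexivity. Qed.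
Lemma fEnG : filter EnGb l35 = lEnG. Proof. vm_compute. reflexivity. Qed.
Lemma fIC : filter ICb l35 = lIC. Proof. vm_compute. reflexivity. Qed.
Lemma fIA : filter IAb l35 = lIA. Proof. vm_compute. reflexivity. Qed.

Definition G48 : seq R4 := map (fun r => let '(a, b, c, d) := r in (b4 a, b4 b, b4 c, b4 d))
 [:: (8, 4, 2, 1); (8, 4, 2, 15); (8, 12, 10, 1); (8, 12, 10, 15); (8, 2, 4, 1); (8, 2, 4, 15);
     (8, 10, 12, 1); (8, 10, 12, 15); (8, 5, 3, 1); (8, 5, 3, 15); (8, 13, 11, 1); (8, 13, 11, 15);
     (8, 3, 5, 1); (8, 3, 5, 15); (8, 11, 13, 1); (8, 11, 13, 15); (1, 4, 2, 8); (1, 4, 2, 15);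
     (1, 12, 10, 8); (1, 12, 10, 15); (1, 2, 4, 8); (1, 2, 4, 15); (1, 10, 12, 8); (1, 10, 12, 15);
     (1, 5, 3, 8); (1, 5, 3, 15); (1, 13, 11, 8); (1, 13, 11, 15); (1, 3, 5, 8); (1, 3, 5, 15);
     (1, 11, 13, 8); (1, 11, 13, 15); (15, 4, 2, 8); (15, 4, 2, 1); (15, 12, 10, 8); (15, 12, 10, 1);
     (15, 2, 4, 8); (15, 2, 4, 1); (15, 10, 12, 8); (15, 10, 12, 1); (15, 5, 3, 8); (15, 5, 3, 1);
     (15, 13, 11, 8); (15, 13, 11, 1); (15, 3, 5, 8); (15, 3, 5, 1); (15, 11, 13, 8); (15, 11, 13, 1)]%N.

Definition allR : seq R4 :=
  [seq (x, y) | x <- [seq (x, y) | x <- [seq (x, y) | x <- allV C2, y <- allV C2],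
                                    y <- allV C2], y <- allV C2].
Definition cubL := map pcO opts.
Definition gq2 (cl : seq (V C2)) (r : R4) :=
  (let m := map (fun e => vmul (pcO e) r) opts in
   all (fun x => x \in cl) m && all (fun b => b \in m) cl) && unit_ok r.

Lemma in_allR r : r \in allR.
Proof.
case: r => [[[a b] c] d].
apply: (@allpairs_f _ _ _ (fun x y => (x, y))); last exact: (in_allV good2).
apply: (@allpairs_f _ _ _ (fun x y => (x, y))); last exact: (in_allV good2).
apply: (@allpairs_f _ _ _ (fun x y => (x, y))); exact: (in_allV good2).
Qed.

Lemma G48_ok1 : all (fun r => gq2 cubL r ==> (r \in G48)) allR.
Proof. vm_compute. reflexivity. Qed.
Lemma G48_ok2 : all (gq2 cubL) G48.
Proof. vm_compute. reflexivity. Qed.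

Lemma eq1_ok : all (fun a => all (fun b => eq1 a b == (a == b)) (allV C2)) (allV C2).
Proof. vm_compute. reflexivity. Qed.


Lemma lines35 q : q \in l35 -> LM2 q \in lines 'F_2.
Proof. by move=> q35; rewrite linesE in_Lset map_f. Qed.

Lemma exists_opt2 (P : pred (option 'F_2)) :
  [exists t, P t] = has (fun e => P (omap enc2 e)) opts.
Proof. by apply: exists_seq; exact: opt2_surj. Qed.

Lemma RC_E q : q \in l35 -> is_RC (LM2 q) = RCb q.
Proof.
move=> q35; rewrite /is_RC lines35 //= exists_opt2; apply: eq_has => e.
rewrite exists_opt2; apply: eq_has => e'.
by rewrite !PcO gen1_eq LMcol_eq (lt_eqE good2).
Qed.

Lemma Tr_E q : q \in l35 -> is_Tr (LM2 q) = Trb q.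
Proof.
move=> q35; rewrite /is_Tr lines35 //= exists_opt2; apply: eq_has => e.
by rewrite PcO tdO_E LMcol_eq (lt_eqE good2).
Qed.

Lemma RA_E q : q \in l35 -> is_RA (LM2 q) = RAb q.
Proof.
move=> q35; rewrite /is_RA lines35 //= exists_opt2; apply: eq_has => e.
rewrite exists_opt2; apply: eq_has => e'.
by rewrite !oscO_E gen1_eq LMker2_eq.
Qed.

Lemma plvE : vec4 0 1 (-1) 0 = vec2 plv.
Proof. by rewrite /= (oppr_c2 F2_char2). Qed.

Lemma UG_E q : q \in l35 -> is_UG (LM2 q) = UGb q.
Proof. by move=> q35; rewrite /is_UG lines35 // ncubE nGammaE Tr_E. Qed.
Lemma UG2_E q : q \in l35 -> is_UG2 (LM2 q) = UG2b q.
Proof. by move=> q35; rewrite /is_UG2 UG_E // plvE in_plane2. Qed.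
Lemma UG1_E q : q \in l35 -> is_UG1 (LM2 q) = UG1b q.
Proof. by move=> q35; rewrite /is_UG1 UG_E // plvE in_plane2. Qed.
Lemma UnG_E q : q \in l35 -> is_UnG (LM2 q) = UnGb q.
Proof. by move=> q35; rewrite /is_UnG lines35 // ncubE nGammaE. Qed.
Lemma EG_E q : q \in l35 -> is_EG (LM2 q) = EGb q.
Proof. by move=> q35; rewrite /is_EG lines35 // ncubE nGammaE. Qed.

Lemma eq1E (a b : V C2) : eq1 a b = (a == b).
Proof. exact/eqP/(allP (allP eq1_ok a (in_allV good2 a)) b (in_allV good2 b)). Qed.

Lemma in_map_has (T1 T2 : eqType) (g : T1 -> T2) (s : seq T1) x :
  (x \in map g s) = has (fun y => x == g y) s.
Proof.
apply/mapP/hasP => [[y ys ->]|[y ys /eqP ->]]; by exists y.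
Qed.

Lemma gq2E r : gq_ok r = gq2 cubL r.
Proof.
rewrite /gq_ok /gq2 /cub_ok; cbv zeta; congr (_ && _); congr (_ && _).
- rewrite all_map; apply: eq_all => e; rewrite -[RHS]/(vmul (pcO e) r \in cubL) /cubL in_map_has.
  by apply: eq_has => e'; rewrite eq1E.
- rewrite /cubL all_map; apply: eq_all => e'.
  rewrite -[RHS]/(pcO e' \in map (fun e => vmul (pcO e) r) opts) in_map_has.
  by apply: eq_has => e; rewrite eq1E eq_sym.
Qed.

Lemma GqG r : (rows4 r \in Gq 'F_2) = (r \in G48).
Proof.
rewrite GqE gq2E; apply/idP/idP => [H|H].
- exact: (implyP (allP G48_ok1 r (in_allR r))).
- exact: (allP G48_ok2).
Qed.


Definition k1 := lRC.
Definition k2 := lIA.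
Definition k3 := lUG2.
Definition k4 := lRA ++ lIC.
Definition k5 := (lTr ++ lUG1) ++ lUnG.
Definition k6 := lEG ++ lEnG.

Definition orb_ok (G : seq R4) (c : seq P2) :=
  all (fun p => all (fun r => has (lt_eq2 (img r p)) c) G &&
                all (fun q => has (fun r => lt_eq2 (img r p) q) G) c) c.

Lemma orb1 : orb_ok G48 k1. Proof. vm_compute. reflexivity. Qed.
Lemma orb2 : orb_ok G48 k2. Proof. vm_compute. reflexivity. Qed.
Lemma orb3 : orb_ok G48 k3. Proof. vm_compute. reflexivity. Qed.
Lemma orb4 : orb_ok G48 k4. Proof. vm_compute. reflexivity. Qed.
Lemma orb5 : orb_ok G48 k5. Proof. vm_compute. reflexivity. Qed.
Lemma orb6 : orb_ok G48 k6. Proof. vm_compute. reflexivity. Qed.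

Lemma cover6 : all (fun p => [|| p \in k1, p \in k2, p \in k3, p \in k4, p \in k5 | p \in k6]) l35.
Proof. vm_compute. reflexivity. Qed.

Lemma sub35 : all (fun p => p \in l35) (k1 ++ k2 ++ k3 ++ k4 ++ k5 ++ k6).
Proof. vm_compute. reflexivity. Qed.

Lemma injs : [&& inj_ok k1, inj_ok k2, inj_ok k3, inj_ok k4, inj_ok k5, inj_ok k6,
  inj_ok lRA, inj_ok lIC, inj_ok lTr & inj_ok lUG1].
Proof. vm_compute. reflexivity. Qed.
Lemma injs2 : [&& inj_ok lUnG, inj_ok lEG & inj_ok lEnG].
Proof. vm_compute. reflexivity. Qed.

Definition dis (s1 s2 : seq P2) := ~~ all (fun p => has (lt_eq2 p) s2) s1.
Lemma diss : [&& dis k1 k2, dis k1 k3, dis k1 k4, dis k1 k5, dis k1 k6,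
  dis k2 k3, dis k2 k4, dis k2 k5, dis k2 k6, dis k3 k4 &
  [&& dis k3 k5, dis k3 k6, dis k4 k5, dis k4 k6 & dis k5 k6]].
Proof. vm_compute. reflexivity. Qed.


Lemma LM2_eq2 p q : lt_eq2 p q -> LM2 p = LM2 q.
Proof. by move=> h; apply/eqP; rewrite (LM_eq good2) (lt_eqE good2). Qed.

Lemma orbitE (c : seq P2) p : orb_ok G48 c -> p \in c -> line_orbit (LM2 p) = Lset c.
Proof.
move=> /allP ok pc; have /andP[/allP h1 /allP h2] := ok p pc.
apply/setP => X; rewrite in_Lset; apply/imsetP/mapP => [[A]|[q qc ->]].
- have [r ->] := rows4_surj A; rewrite GqG => rG ->.
  have /hasP[q qc e] := h1 r rG; exists q => //.
  by rewrite LM_mul; exact: LM2_eq2.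
- have /hasP[r rG e] := h2 q qc; exists (rows4 r); first by rewrite GqG.
  by rewrite LM_mul; apply/esym/LM2_eq2.
Qed.

Lemma Lset_neq s1 s2 : dis s1 s2 -> Lset s1 != Lset s2.
Proof.
move=> /allPn[p ps1 np]; apply/eqP => e.
have : LM2 p \in Lset s2 by rewrite -e in_Lset map_f.
rewrite in_Lset => /mapP[q qs2 /eqP]; rewrite (LM_eq good2) (lt_eqE good2) => h.
by case/hasP: np; exists q.
Qed.

Lemma in35 p : p \in k1 ++ k2 ++ k3 ++ k4 ++ k5 ++ k6 -> p \in l35.
Proof. exact: (allP sub35). Qed.

Lemma orbit_in c : orb_ok G48 c -> {subset c <= l35} -> c != [::] ->
  Lset c \in line_orbits 'F_2.
Proof.
case: c => [//|p c'] ok sub _; apply/imsetP; exists (LM2 p).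
  by apply: lines35; apply: sub; rewrite mem_head.
by rewrite (orbitE ok (mem_head _ _)).
Qed.

Unset Implicit Arguments.

Theorem theorem4p4 (K : finFieldType) (f : {rmorphism 'F_2 -> K})
    (hK : #|K| = 4%N) :
  let L1 := [set L : 'M['F_2]_4 | is_RC L] in
  let L2 := [set L : 'M['F_2]_4 | is_IA f L] in
  let L3 := [set L : 'M['F_2]_4 | is_UG2 L] in
  let L4 := [set L : 'M['F_2]_4 | is_RA L] :|: [set L | is_IC f L] in
  let L5 := [set L : 'M['F_2]_4 | is_Tr L] :|: [set L | is_UG1 L]
              :|: [set L | is_UnG L] in
  let L6 := [set L : 'M['F_2]_4 | is_EG L] :|: [set L | is_EnG f L] in
  [/\ line_orbits 'F_2 = [set L1; L2; L3; L4; L5; L6],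
      #|line_orbits 'F_2| = 6%N,
      [/\ #|L1| = 3%N, #|L2| = 1%N, #|L3| = 3%N &
          [/\ #|L4| = 4%N, #|L5| = 12%N & #|L6| = 12%N]] &
      [/\ #|[set L : 'M['F_2]_4 | is_RA L]| = 3%N,
          #|[set L : 'M['F_2]_4 | is_IC f L]| = 1%N,
          #|[set L : 'M['F_2]_4 | is_Tr L]| = 3%N,
          #|[set L : 'M['F_2]_4 | is_UG1 L]| = 3%N &
          [/\ #|[set L : 'M['F_2]_4 | is_UnG L]| = 6%N,
              #|[set L : 'M['F_2]_4 | is_EG L]| = 6%N &
              #|[set L : 'M['F_2]_4 | is_EnG f L]| = 6%N]]].
Proof.
move=> L1 L2 L3 L4 L5 L6.
have [w [hw0 hw1]] : exists w : K, w != 0 /\ w != 1.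
  have : ~~ ([set: K] \subset [set 0; 1]).
    by apply/negP => /subset_leq_card; rewrite cardsT hK cards2 eq_sym oner_eq0.
  by case/subsetPn => x _; rewrite !inE negb_or => /andP[x0 x1]; exists x.
have SRC : [set L : 'M['F_2]_4 | is_RC L] = Lset lRC.
  by rewrite -fRC; apply: pred_Lset => [L /andP[]//|q q35]; exact: RC_E.
have STr : [set L : 'M['F_2]_4 | is_Tr L] = Lset lTr.
  by rewrite -fTr; apply: pred_Lset => [L /andP[]//|q q35]; exact: Tr_E.
have SRA : [set L : 'M['F_2]_4 | is_RA L] = Lset lRA.
  by rewrite -fRA; apply: pred_Lset => [L /andP[]//|q q35]; exact: RA_E.
have SUG2 : [set L : 'M['F_2]_4 | is_UG2 L] = Lset lUG2.
  by rewrite -fUG2; apply: pred_Lset => [L /andP[/and4P[]]//|q q35]; exact: UG2_E.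
have SUG1 : [set L : 'M['F_2]_4 | is_UG1 L] = Lset lUG1.
  by rewrite -fUG1; apply: pred_Lset => [L /andP[/and4P[]]//|q q35]; exact: UG1_E.
have SUnG : [set L : 'M['F_2]_4 | is_UnG L] = Lset lUnG.
  by rewrite -fUnG; apply: pred_Lset => [L /and3P[]//|q q35]; exact: UnG_E.
have SEG : [set L : 'M['F_2]_4 | is_EG L] = Lset lEG.
  by rewrite -fEG; apply: pred_Lset => [L /and3P[]//|q q35]; exact: EG_E.
have SIC : [set L : 'M['F_2]_4 | is_IC f L] = Lset lIC.
  rewrite -fIC; apply: pred_Lset => [L /andP[]//|q q35].
  by rewrite (@IC_E K f hK w hw0 hw1 q) lines35.
have SIA : [set L : 'M['F_2]_4 | is_IA f L] = Lset lIA.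
  rewrite -fIA; apply: pred_Lset => [L /andP[]//|q q35].
  by rewrite (@IA_E K f hK w hw0 hw1 q) lines35.
have SEnG : [set L : 'M['F_2]_4 | is_EnG f L] = Lset lEnG.
  rewrite -fEnG; apply: pred_Lset => [L /and5P[]//|q q35].
  rewrite /is_EnG lines35 // ncubE nGammaE (@IC_E K f hK w hw0 hw1 q).
  by rewrite (@IA_E K f hK w hw0 hw1 q) lines35.
have E1 : L1 = Lset k1 by rewrite /L1 SRC.
have E2 : L2 = Lset k2 by rewrite /L2 SIA.
have E3 : L3 = Lset k3 by rewrite /L3 SUG2.
have E4 : L4 = Lset k4 by rewrite /L4 SRA SIC Lset_cat.
have E5 : L5 = Lset k5 by rewrite /L5 STr SUG1 SUnG !Lset_cat.
have E6 : L6 = Lset k6 by rewrite /L6 SEG SEnG Lset_cat.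
have sub : forall c : seq P2, {subset c <= k1 ++ k2 ++ k3 ++ k4 ++ k5 ++ k6} -> {subset c <= l35}.
  by move=> c h p pc; apply: in35; apply: h.
have LO : line_orbits 'F_2 = [set Lset k1; Lset k2; Lset k3; Lset k4; Lset k5; Lset k6].
  apply/setP => X; apply/idP/idP => [/imsetP[L]|].
  - rewrite linesE in_Lset => /mapP[p p35 ->] ->.
    have := allP cover6 p p35.
    case/orP => [h|/orP[h|/orP[h|/orP[h|/orP[h|h]]]]].
    + by rewrite (orbitE orb1 h) !inE eqxx.
    + by rewrite (orbitE orb2 h) !inE eqxx ?orbT.
    + by rewrite (orbitE orb3 h) !inE eqxx ?orbT.
    + by rewrite (orbitE orb4 h) !inE eqxx ?orbT.
    + by rewrite (orbitE orb5 h) !inE eqxx ?orbT.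
    + by rewrite (orbitE orb6 h) !inE eqxx ?orbT.
  - rewrite !inE => /orP[/orP[/orP[/orP[/orP[|]|]|]|]|] /eqP ->.
    + have s1 : {subset k1 <= l35} by apply/allP; vm_compute; reflexivity.
      have := orbit_in orb1 s1 isT. exact.
    + have s2 : {subset k2 <= l35} by apply/allP; vm_compute; reflexivity.
      have := orbit_in orb2 s2 isT. exact.
    + have s3 : {subset k3 <= l35} by apply/allP; vm_compute; reflexivity.
      have := orbit_in orb3 s3 isT. exact.
    + have s4 : {subset k4 <= l35} by apply/allP; vm_compute; reflexivity.
      have := orbit_in orb4 s4 isT. exact.
    + have s5 : {subset k5 <= l35} by apply/allP; vm_compute; reflexivity.
      have := orbit_in orb5 s5 isT. exact.
    + have s6 : {subset k6 <= l35} by apply/allP; vm_compute; reflexivity.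
      have := orbit_in orb6 s6 isT. exact.
have N12 : Lset k1 != Lset k2 by apply: Lset_neq; vm_compute; reflexivity.
have N13 : Lset k1 != Lset k3 by apply: Lset_neq; vm_compute; reflexivity.
have N14 : Lset k1 != Lset k4 by apply: Lset_neq; vm_compute; reflexivity.
have N15 : Lset k1 != Lset k5 by apply: Lset_neq; vm_compute; reflexivity.
have N16 : Lset k1 != Lset k6 by apply: Lset_neq; vm_compute; reflexivity.
have N23 : Lset k2 != Lset k3 by apply: Lset_neq; vm_compute; reflexivity.
have N24 : Lset k2 != Lset k4 by apply: Lset_neq; vm_compute; reflexivity.
have N25 : Lset k2 != Lset k5 by apply: Lset_neq; vm_compute; reflexivity.
have N26 : Lset k2 != Lset k6 by apply: Lset_neq; vm_compute; reflexivity.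
have N34 : Lset k3 != Lset k4 by apply: Lset_neq; vm_compute; reflexivity.
have N35 : Lset k3 != Lset k5 by apply: Lset_neq; vm_compute; reflexivity.
have N36 : Lset k3 != Lset k6 by apply: Lset_neq; vm_compute; reflexivity.
have N45 : Lset k4 != Lset k5 by apply: Lset_neq; vm_compute; reflexivity.
have N46 : Lset k4 != Lset k6 by apply: Lset_neq; vm_compute; reflexivity.
have N56 : Lset k5 != Lset k6 by apply: Lset_neq; vm_compute; reflexivity.
have i1 : inj_ok k1 by vm_compute; reflexivity.
have i2 : inj_ok k2 by vm_compute; reflexivity.
have i3 : inj_ok k3 by vm_compute; reflexivity.
have i4 : inj_ok k4 by vm_compute; reflexivity.
have i5 : inj_ok k5 by vm_compute; reflexivity.
have i6 : inj_ok k6 by vm_compute; reflexivity.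
have iRA : inj_ok lRA by vm_compute; reflexivity.
have iIC : inj_ok lIC by vm_compute; reflexivity.
have iTr : inj_ok lTr by vm_compute; reflexivity.
have iUG1 : inj_ok lUG1 by vm_compute; reflexivity.
have iUnG : inj_ok lUnG by vm_compute; reflexivity.
have iEG : inj_ok lEG by vm_compute; reflexivity.
have iEnG : inj_ok lEnG by vm_compute; reflexivity.
rewrite E1 E2 E3 E4 E5 E6.
have U : uniq [:: Lset k1; Lset k2; Lset k3; Lset k4; Lset k5; Lset k6].
  rewrite !cons_uniq !in_cons !in_nil !orbF !negb_or.
  by rewrite N12 N13 N14 N15 N16 N23 N24 N25 N26 N34 N35 N36 N45 N46 N56.
split.
- exact: LO.
- rewrite LO.
  have -> : [set Lset k1; Lset k2; Lset k3; Lset k4; Lset k5; Lset k6] =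
            [set X in [:: Lset k1; Lset k2; Lset k3; Lset k4; Lset k5; Lset k6]].
    by apply/setP => X; rewrite !inE !orbA ?orbF.
  by rewrite cardsE (card_uniqP U).
- rewrite (card_Lset i1) (card_Lset i2) (card_Lset i3) (card_Lset i4) (card_Lset i5) (card_Lset i6).
  by split.
- rewrite SRA SIC STr SUG1 SUnG SEG SEnG (card_Lset iRA) (card_Lset iIC) (card_Lset iTr).
  rewrite (card_Lset iUG1) (card_Lset iUnG) (card_Lset iEG) (card_Lset iEnG).
  by split.
Qed.
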